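(* Let $\mathbf L\in\mathbb R^{n\times n}$ be positive semidefinite, $\mathcal D,\mathbf W$ a dictionary with positive weights, $\alpha>0$, $r\geq 1$, and let $l_i$, $\widehat{\mathbf L}$, $\tilde s$ be as in the context; assume $l_i>0$ for all $i\in[n]$ and set $\tilde d=\sum_{i=1}^n l_i$. Let $t\sim\mathrm{Poisson}(re^{1/r}\tilde d)$ and conditionally on $t$ let $\sigma=(\sigma_1,\dots,\sigma_t)$ be i.i.d. with $\Pr(\sigma_j=i)=l_i/\tilde d$; define $[\widetilde{\mathbf L}_\sigma]_{ab}=\frac{\mathbf L_{\sigma_a\sigma_b}}{r\sqrt{l_{\sigma_a}l_{\sigma_b}}}$. Then $$\mathbb E_{t,\sigma}\!\left[\frac{e^{\tilde s}\det(\mathbf I+\alpha\widetilde{\mathbf L}_\sigma)}{e^{t/r}\det(\mathbf I+\alpha\widehat{\mathbf L})}\right]=\exp\big(\tilde s+r\tilde d-re^{1/r}\tilde d\big)\,\frac{\det(\mathbf I+\alpha\mathbf L)}{\det(\mathbf I+\alpha\widehat{\mathbf L})}.$$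
   Context: A dictionary is a sequence $\mathcal D=(\mathcal D_1,\dots,\mathcal D_m)$ of elements of $[n]=\{1,\dots,n\}$, with a diagonal matrix $\mathbf W\in\mathbb R^{m\times m}$ of strictly positive weights. For index sequences $A,B$, $\mathbf L_{A,B}$ denotes the submatrix with rows indexed by $A$ and columns by $B$ (with repetitions allowed). The approximate marginals are $$l_i=\alpha\Big(\mathbf L_{ii}-\alpha\,\mathbf L_{\{i\},\mathcal D}\big(\alpha\mathbf L_{\mathcal D,\mathcal D}+\mathbf W^{-1}\big)^{-1}\mathbf L_{\mathcal D,\{i\}}\Big),\qquad i\in[n].$$ Further, $\widehat{\mathbf L}=\mathbf W^{1/2}\mathbf L_{\mathcal D,\mathcal D}\mathbf W^{1/2}\in\mathbb R^{m\times m}$ and $\tilde s=d_{\mathrm{eff}}(\alpha\widehat{\mathbf L})=\mathrm{tr}\big(\alpha\widehat{\mathbf L}(\alpha\widehat{\mathbf L}+\mathbf I)^{-1}\big)$. The determinant of a $0\times0$ matrix is $1$. *)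

(* Defs.v *)
From HB Require Import structures.
From mathcomp Require Import all_boot all_order all_algebra.
From mathcomp Require Import all_classical all_reals all_analysis.
Set Implicit Arguments. Unset Strict Implicit. Unset Printing Implicit Defensive.
Import Order.TTheory GRing.Theory Num.Theory.
Local Open Scope ring_scope.

Section Defs.
Variable R : realType.

Definition psd n (L : 'M[R]_n) : Prop :=
  L^T = L /\ forall x : 'cV[R]_n, 0 <= (x^T *m L *m x) 0 0.

Definition subL n p q (L : 'M[R]_n) (A : 'I_p -> 'I_n) (B : 'I_q -> 'I_n)
  : 'M[R]_(p, q) := \matrix_(a, b) L (A a) (B b).

Definition lmarg n m (L : 'M[R]_n) (D : 'I_m -> 'I_n) (w : 'I_m -> R)
    (alpha : R) (i : 'I_n) : R :=
  alpha * (L i i - alpha *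
    (subL L (fun _ : 'I_1 => i) D
      *m invmx (alpha *: subL L D D + diag_mx (\row_k (w k)^-1))
      *m subL L D (fun _ : 'I_1 => i)) 0 0).

Definition Lhat n m (L : 'M[R]_n) (D : 'I_m -> 'I_n) (w : 'I_m -> R)
  : 'M[R]_m :=
  diag_mx (\row_k Num.sqrt (w k)) *m subL L D D *m diag_mx (\row_k Num.sqrt (w k)).

Definition deff m (A : 'M[R]_m) : R := \tr (A *m invmx (A + 1%:M)).

Definition Ltilde n t (L : 'M[R]_n) (l : 'I_n -> R) (r : R)
    (sigma : {ffun 'I_t -> 'I_n}) : 'M[R]_t :=
  \matrix_(a, b) (L (sigma a) (sigma b) / (r * Num.sqrt (l (sigma a) * l (sigma b)))).

(* t-th term of E_{t,sigma}[f t sigma] where t ~ Poisson(lam) and, given t,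
   sigma_1..sigma_t are i.i.d. with Pr(sigma_j = i) = p i. *)
Definition poisson_iid_term n (lam : R) (p : 'I_n -> R)
    (f : forall t : nat, {ffun 'I_t -> 'I_n} -> R) (t : nat) : R :=
  expR (- lam) * lam ^+ t / (t`!)%:R *
    \sum_(sigma : {ffun 'I_t -> 'I_n}) ((\prod_(j < t) p (sigma j)) * f t sigma).

End Defs.

(* Main.v *)
Require Import Defs.
From HB Require Import structures.
From mathcomp Require Import all_boot all_order all_algebra.
From mathcomp Require Import all_classical all_reals all_analysis.
From mathcomp Require Import ring lra perm.
Set Implicit Arguments. Unset Strict Implicit. Unset Printing Implicit Defensive.
Import Order.TTheory GRing.Theory Num.Theory.
Import numFieldNormedType.Exports.
Local Open Scope classical_set_scope.
Local Open Scope ring_scope.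

Lemma sylvester (R : comRingType) t n (A : 'M[R]_(t, n)) (B : 'M[R]_(n, t)) :
  \det (1%:M + A *m B) = \det (1%:M + B *m A).
Proof.
have e1 : block_mx 1%:M (- A) B 1%:M =
   block_mx 1%:M 0 B 1%:M *m block_mx 1%:M (- A) 0 (1%:M + B *m A).
  rewrite mulmx_block !mul1mx !mulmx1 !mul0mx ?mulmx0 ?addr0 ?add0r.

  by rewrite mulmxN addrCA addNr addr0.
have e2 : block_mx 1%:M (- A) B 1%:M =
   block_mx (1%:M + A *m B) (- A) 0 1%:M *m block_mx 1%:M 0 B 1%:M.
  rewrite mulmx_block !mul1mx !mulmx1 !mul0mx ?mulmx0 ?addr0 ?add0r.

  by rewrite mulNmx addrK.
have := congr1 determinant e1; rewrite e2 !det_mulmx det_lblock det_ublock.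
rewrite det_ublock !det1 !mul1r !mulr1 => ->; by [].
Qed.

Section Main.
Variable R : realType.

Lemma cvg_sum_seq (I : Type) (r : seq I) (u : I -> nat -> R) (a : I -> R) :
  (forall i, u i @ \oo --> a i) ->
  (fun N => \sum_(i <- r) u i N) @ \oo --> \sum_(i <- r) a i.
Proof.
move=> H; elim: r => [|i r IH].
  rewrite big_nil; under eq_fun do rewrite big_nil; exact: cvg_cst.
rewrite big_cons; under eq_fun do rewrite big_cons.
exact: cvgD.
Qed.

Lemma exp_series_cvg (x : R) : series (exp_coeff x) @ \oo --> expR x.
Proof. exact: (is_cvg_series_exp_coeff x). Qed.

Lemma series_shift_cvg (x y : R) (k : nat) :
  series (fun t => x ^+ t / (t`!)%:R * (t ^_ k)%:R * y ^+ (t - k)) @ \oo -->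
  x ^+ k * expR (x * y).
Proof.
rewrite -(cvg_shiftn k).
have E : forall N, series (fun t => x ^+ t / (t`!)%:R * (t ^_ k)%:R * y ^+ (t - k)) (N + k)%N
   = x ^+ k * series (exp_coeff (x * y)) N.
  move=> N; rewrite /series /= (big_cat_nat (n := k)) //=; last by rewrite leq_addl.
  rewrite big1_seq ?add0r; last first.
    move=> i; rewrite mem_index_iota => /andP [_ hi]; by rewrite ffact_small // mulr0 mul0r.
  rewrite -{1}(add0n k) big_addn addnK big_distrr /=; apply: eq_bigr => i _.
  rewrite addnK /exp_coeff /= exprMn exprD.
  have hf : ((i + k) ^_ k * i`!)%N = (i + k)`! by rewrite -{2}(addnK k i) ffact_fact ?leq_addl.
  rewrite -hf natrM invfM.
  have h1 : ((i + k) ^_ k)%:R != 0 :> R.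
    by rewrite pnatr_eq0 -lt0n ffact_gt0 leq_addl.
  field; rewrite ?h1 //= pnatr_eq0 -lt0n fact_gt0 //.
under eq_fun do rewrite E.
apply: cvgMr; exact: exp_series_cvg.
Qed.

Definition ext t (T : finType) (s : {ffun 'I_t -> T}) (x : T) : {ffun 'I_t.+1 -> T} :=
  [ffun a => if unlift ord_max a is Some b then s b else x].

Lemma ext_max t (T : finType) (s : {ffun 'I_t -> T}) x : ext s x ord_max = x.
Proof. by rewrite ffunE unlift_none. Qed.

Lemma ext_widen t (T : finType) (s : {ffun 'I_t -> T}) x (a : 'I_t) :
  ext s x (widen_ord (leqnSn t) a) = s a.
Proof.
have -> : widen_ord (leqnSn t) a = lift ord_max a by apply: val_inj => /=; rewrite /bump leqNgt ltn_ord.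
by rewrite ffunE liftK.
Qed.

Lemma sum_ffunS t (T : finType) (F : {ffun 'I_t.+1 -> T} -> R) :
  \sum_(tau : {ffun 'I_t.+1 -> T}) F tau =
  \sum_(x : T) \sum_(s : {ffun 'I_t -> T}) F (ext s x).
Proof.
rewrite pair_big /=.
rewrite (reindex (fun q : T * {ffun 'I_t -> T} => ext q.2 q.1)) //=.
exists (fun tau : {ffun 'I_t.+1 -> T} => (tau ord_max, [ffun b => tau (lift ord_max b)])).
  move=> [x s] _ /=; rewrite ext_max; congr (_, _); apply/ffunP => b.
  by rewrite !ffunE liftK.
move=> tau _ /=; apply/ffunP => a; rewrite ffunE.
by case: (unliftP ord_max a) => [b ->|->]; rewrite ?ffunE.
Qed.

Definition cnt n t (s : {ffun 'I_t -> 'I_n}) (i : 'I_n) : R :=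
  \sum_(a < t) (s a == i)%:R.

Lemma cnt_ext n t (s : {ffun 'I_t -> 'I_n}) x i :
  cnt (ext s x) i = cnt s i + (x == i)%:R.
Proof. by rewrite /cnt big_ord_recr /= ext_max; under eq_bigr do rewrite ext_widen. Qed.

Lemma prod_ext n t (p : 'I_n -> R) (s : {ffun 'I_t -> 'I_n}) x :
  \prod_(a < t.+1) p (ext s x a) = (\prod_(a < t) p (s a)) * p x.
Proof. by rewrite big_ord_recr /= ext_max; under eq_bigr do rewrite ext_widen. Qed.

Definition upd n (u : 'I_n -> R) (x : 'I_n) (c : R) := fun i => if i == x then c else u i.

Lemma prod_split n (u v c : 'I_n -> R) x :
  \prod_i (u i + v i * (c i + (x == i)%:R)) =
  \prod_i (u i + v i * c i) + v x * \prod_i (upd u x 1 i + upd v x 0 i * c i).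
Proof.
rewrite (bigD1 x) //= [X in _ = X + _](bigD1 x) //= [X in _ = _ + _ * X](bigD1 x) //=.
rewrite /upd eqxx mul0r addr0 mul1r.
have -> : \prod_(i | i != x) (u i + v i * (c i + (x == i)%:R)) = \prod_(i | i != x) (u i + v i * c i).
  by apply: eq_bigr => i /negbTE hi; rewrite eq_sym hi addr0.
have -> : \prod_(i | i != x) ((if i == x then 1 else u i) + (if i == x then 0 else v i) * c i)
   = \prod_(i | i != x) (u i + v i * c i).
  by apply: eq_bigr => i /negbTE hi; rewrite hi.
rewrite /=; ring.
Qed.

Definition Gs n t (p u v : 'I_n -> R) :=
  \sum_(s : {ffun 'I_t -> 'I_n}) (\prod_(a < t) p (s a)) * \prod_i (u i + v i * cnt s i).

Lemma Gs_rec n t (p u v : 'I_n -> R) :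
  Gs t.+1 p u v = (\sum_i p i) * Gs t p u v +
     \sum_x p x * v x * Gs t p (upd u x 1) (upd v x 0).
Proof.
rewrite /Gs sum_ffunS.
have hc : forall x (s : {ffun 'I_t -> 'I_n}), \prod_i (u i + v i * cnt (ext s x) i) =
    \prod_i (u i + v i * (cnt s i + (x == i)%:R)).
  by move=> x s; apply: eq_bigr => i _; rewrite cnt_ext.
under eq_bigr do under eq_bigr do rewrite prod_ext hc prod_split.
rewrite big_distrl /= -big_split /=; apply: eq_bigr => x _.
rewrite big_distrr big_distrr -big_split /=; apply: eq_bigr => s _.
ring.
Qed.

Lemma deriv_prod_ord m (F : 'I_m -> {poly R}) :
  (\prod_i F i)^`() = \sum_x (F x)^`() * \prod_(i | i != x) F i.
Proof.
elim: m F => [|m IH] F.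
  by rewrite big_ord0 big_ord0 derivC.
rewrite big_ord_recr /= derivM IH big_ord_recr /= big_distrl /=.
congr (_ + _).
  apply: eq_bigr => x _; rewrite -mulrA; congr (_ * _).
  rewrite [RHS]big_mkcond big_ord_recr /= [X in X * _ = _]big_mkcond /=.
  have -> : (ord_max != widen_ord (leqnSn m) x) by rewrite neq_ltn /= ltn_ord orbT.
  congr (_ * _); apply: eq_bigr => i _.
rewrite mulrC; congr (_ * _).
rewrite (big_mkcond (fun i => i != ord_max)) big_ord_recr /= eqxx mulr1.
apply: eq_bigr => i _; have -> // : (widen_ord (leqnSn m) i != ord_max).
by rewrite neq_ltn /= ltn_ord.
Qed.

Definition Pp n (p u v : 'I_n -> R) : {poly R} :=
  \prod_(i < n) ((u i)%:P + (v i * p i) *: 'X).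

Lemma Pp_deriv n (p u v : 'I_n -> R) :
  (Pp p u v)^`() = \sum_x (p x * v x) *: Pp p (upd u x 1) (upd v x 0).
Proof.
rewrite /Pp deriv_prod_ord; apply: eq_bigr => x _.
rewrite derivD derivC add0r derivZ derivX alg_polyC -mul_polyC [p x * _]mulrC; congr (_ * _).
rewrite [RHS](bigD1 x) //= /upd eqxx mul0r scale0r addr0 mul1r.
by apply: eq_bigr => i /negbTE ->.
Qed.

Definition Phi t (S : R) (Q : {poly R}) :=
  \sum_(k < t.+1) Q`_k * (t ^_ k)%:R * S ^+ (t - k).

Lemma Phi_lin t S I (r : seq I) (c : I -> R) (Q : I -> {poly R}) :
  Phi t S (\sum_(x <- r) c x *: Q x) = \sum_(x <- r) c x * Phi t S (Q x).
Proof.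
rewrite /Phi; under eq_bigr do rewrite coef_sum big_distrl big_distrl /=.
rewrite exchange_big /=; apply: eq_bigr => x _; rewrite big_distrr /=.
by apply: eq_bigr => k _; rewrite coefZ !mulrA.
Qed.

Lemma Phi_rec t S Q : Phi t.+1 S Q = S * Phi t S Q + Phi t S Q^`().
Proof.
rewrite /Phi big_ord_recl /= subn0 ffactn0 mulr1.
rewrite big_distrr /= [X in _ = X + _]big_ord_recl /= subn0 ffactn0 mulr1.
rewrite -addrA; congr (_ + _); first by rewrite exprS; ring.
have -> : \sum_(i < t) S * (Q`_(bump 0 i) * (t ^_ bump 0 i)%:R * S ^+ (t - bump 0 i))
   = \sum_(i < t.+1) S * (Q`_i.+1 * (t ^_ i.+1)%:R * S ^+ (t - i.+1)).
  by rewrite [in RHS]big_ord_recr /= ffact_small // mulr0 mul0r mulr0 addr0.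
rewrite -big_split /=; apply: eq_bigr => i _.
rewrite coef_deriv subSS /bump /= add1n.
have hi : (i <= t)%N by rewrite -ltnS.
rewrite ffactSS ffactnSr -mulr_natr.
case: (ltnP i t) => hit.
  have e : (t - i = (t - i.+1).+1)%N by rewrite subnSK.
  have E : (t.+1 = (t - i.+1).+1 + i.+1)%N by rewrite -e addnS subnK.
  rewrite e exprS !natrM.
  have -> : (t.+1)%:R = ((t - i.+1).+1)%:R + (i.+1)%:R :> R by rewrite -natrD -E.
  rewrite -mulr_natr; ring.
have eti : i = t :> nat by apply/eqP; rewrite eqn_leq hi hit.
rewrite eti subnn !natrM /=.
rewrite -mulr_natr; ring.
Qed.

Lemma Gs_Phi n t (p u v : 'I_n -> R) :
  Gs t p u v = Phi t (\sum_i p i) (Pp p u v).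
Proof.
elim: t u v => [|t IH] u v.
  rewrite /Gs /Phi big_ord_recl big_ord0 addr0 /= subnn expr0 mulr1 ffactn0 mulr1.
  rewrite (eq_bigr (fun _ => \prod_i u i)); last first.
    move=> s _; rewrite big_ord0 mul1r; apply: eq_bigr => i _.
    by rewrite /cnt big_ord0 mulr0 addr0.
  rewrite sumr_const card_ffun !card_ord expn0 mulr1n.
  rewrite -horner_coef0 /Pp horner_prod; apply: eq_bigr => i _.
  by rewrite hornerD hornerC hornerZ hornerX mulr0 addr0.
rewrite Gs_rec Phi_rec IH Pp_deriv Phi_lin; congr (_ + _).
by apply: eq_bigr => x _; rewrite IH.
Qed.


Lemma sum_ind n (x : 'I_n) (g : 'I_n -> R) : \sum_i (x == i)%:R * g i = g x.
Proof.
rewrite (bigD1 x) //= eqxx mul1r big1 ?addr0 // => i hi.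
by rewrite eq_sym (negbTE hi) mul0r.
Qed.

Lemma det_Ltilde n t (L : 'M[R]_n) (l : 'I_n -> R) (a r : R)
    (s : {ffun 'I_t -> 'I_n}) :
  (forall i, 0 < l i) -> r != 0 ->
  \det (1%:M + a *: Ltilde L l r s) =
  \det (\matrix_(i, j) ((i == j)%:R + cnt s i * (a / r * L i j / l i))).
Proof.
move=> hl hr.
have hs : forall i, 0 < Num.sqrt (l i) by move=> i; rewrite sqrtr_gt0.
pose U : 'M[R]_(t, n) := \matrix_(x, i) ((s x == i)%:R / Num.sqrt (l i)).
pose K : 'M[R]_n := (a / r) *: L.
have e1 : 1%:M + a *: Ltilde L l r s = 1%:M + (U *m K) *m U^T.
  congr (_ + _); apply/matrixP => x y; rewrite !mxE.
  have h1 : forall j, (U *m K) x j = K (s x) j / Num.sqrt (l (s x)).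
    move=> j; rewrite mxE (eq_bigr (fun i => (s x == i)%:R * (K i j / Num.sqrt (l i)))) ?sum_ind //.
    by move=> i _; rewrite !mxE mulrAC -mulrA.
  under eq_bigr do rewrite h1 !mxE.
  rewrite (eq_bigr (fun j => (s y == j)%:R * (K (s x) j / Num.sqrt (l (s x)) / Num.sqrt (l j)))); last first.
    by move=> j _; rewrite !mxE; ring.
  rewrite sum_ind /K mxE sqrtrM; last exact: ltW.
  have := hs (s x); have := hs (s y); rewrite !lt0r => /andP [h2 _] /andP [h3 _].
  by field; rewrite h2 h3 hr.
rewrite e1 sylvester; congr (\det _); apply/matrixP => i j; rewrite !mxE; congr (_ + _).
rewrite /cnt big_distrl /=; apply: eq_bigr => k _.
have h1 : forall j, (U *m K) k j = K (s k) j / Num.sqrt (l (s k)).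
  move=> j'; rewrite mxE (eq_bigr (fun i => (s k == i)%:R * (K i j' / Num.sqrt (l i)))) ?sum_ind //.
  by move=> i' _; rewrite !mxE; ring.
rewrite h1 !mxE.
case: eqP => [<-|_]; last by rewrite !mul0r.
have := hs (s k); rewrite lt0r => /andP [h2 h2'].
have hl2 : l (s k) = Num.sqrt (l (s k)) * Num.sqrt (l (s k)).
  by rewrite -expr2 sqr_sqrtr // ltW.
rewrite [in RHS]hl2; field; by rewrite h2 hr.
Qed.

End Main.

Section M.
Variable R : realType.

Lemma sum_ext0 (F : nat -> R) a b :
  (forall k, (a <= k)%N -> F k = 0) -> (forall k, (b <= k)%N -> F k = 0) ->
  \sum_(k < a) F k = \sum_(k < b) F k.
Proof.
wlog hab : a b / (a <= b)%N.
  move=> H ha hb; case: (leqP a b) => h; first exact: H.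
  by symmetry; apply: H => //; exact: ltnW.
move=> ha hb; rewrite -!(big_mkord xpredT F) [RHS](big_cat_nat (n := a)) //=.
rewrite [X in _ + X]big1_seq ?addr0 //.
by move=> k /andP [_]; rewrite mem_index_iota => /andP [hk _]; exact: ha.
Qed.

Lemma Phi_size t (S : R) (Q : {poly R}) :
  Phi t S Q = \sum_(k < size Q) Q`_k * (t ^_ k)%:R * S ^+ (t - k).
Proof.
rewrite /Phi; apply: (sum_ext0 (F := fun k => Q`_k * (t ^_ k)%:R * S ^+ (t - k))).
  by move=> k hk; rewrite ffact_small // mulr0 mul0r.
by move=> k hk; rewrite nth_default // !mul0r.
Qed.

Lemma leib n (M : 'M[R]_n) : \det M = \sum_(s : 'S_n) (-1) ^+ s * \prod_i M i (s i).
Proof. by []. Qed.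

Lemma main_aux (n m : nat) (L : 'M[R]_n)
    (D : 'I_m -> 'I_n) (w : 'I_m -> R) (alpha r : R) :
  psd L ->
  (forall k, 0 < w k) ->
  0 < alpha ->
  1 <= r ->
  (forall i, 0 < lmarg L D w alpha i) ->
  let l := lmarg L D w alpha in
  let dt := \sum_(i < n) l i in
  let Lh := Lhat L D w in
  let st := deff (alpha *: Lh) in
  let lam := r * expR r^-1 * dt in
  series (poisson_iid_term lam (fun i => l i / dt)
    (fun t sigma =>
       expR st * \det (1%:M + alpha *: Ltilde L l r sigma)
       / (expR (t%:R / r) * \det (1%:M + alpha *: Lh)))) @ \oo -->
  expR (st + r * dt - r * expR r^-1 * dt)
    * \det (1%:M + alpha *: L) / \det (1%:M + alpha *: Lh).
Proof.
move=> _ _ ha hr hl0 l dt Lh st lam.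
have hl : forall i, 0 < l i := hl0.
have Edt : dt = \sum_i l i := erefl.
have Elam : lam = r * expR r^-1 * dt := erefl.
clearbody l Lh st dt lam; clear hl0.
have r0 : r != 0 by rewrite gt_eqF //; lra.
have hdt : forall i : 'I_n, 0 < dt.
  move=> i; rewrite Edt (bigD1 i) //=.
  have : 0 <= \sum_(j < n | j != i) l j by apply: sumr_ge0 => j _; exact: ltW.
  have := hl i; lra.
set dh := \det (1%:M + alpha *: Lh).
set E := expR r^-1.
set p := fun i => l i / dt.
set S := \sum_i p i.
pose us := fun (s : 'S_n) (i : 'I_n) => (i == s i)%:R : R.
pose vs := fun (s : 'S_n) (i : 'I_n) => alpha / r * L i (s i) / l i.
pose P := fun s => Pp p (us s) (vs s).
pose x := lam / E.
pose c := expR st / dh.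
pose g := fun (s : 'S_n) (k : 'I_(size (P s))) (t : nat) =>
  (c * (-1) ^+ s * (P s)`_k * expR (- lam)) * (x ^+ t / (t`!)%:R * (t ^_ k)%:R * S ^+ (t - k)).
set F := poisson_iid_term _ _ _.
have EF : F = fun t => \sum_s \sum_k g s k t.
  apply: funext => t; rewrite /F /poisson_iid_term.
  have eE : expR (t%:R / r) = E ^+ t by rewrite /E -expRM_natl.
  have inner : \sum_(sigma : {ffun 'I_t -> 'I_n}) (\prod_(j < t) p (sigma j)) *
       (expR st * \det (1%:M + alpha *: Ltilde L l r sigma) / (expR (t%:R / r) * dh))
     = c / E ^+ t * \sum_(s : 'S_n) (-1) ^+ s * Gs t p (us s) (vs s).
    rewrite /Gs.
    under eq_bigr => sigma _ do rewrite (det_Ltilde _ _ _ hl r0) leib eE.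
    rewrite [RHS](_ : _ = \sum_(s : 'S_n) \sum_(sigma : {ffun 'I_t -> 'I_n}) c / E ^+ t * ((-1) ^+ s *
       ((\prod_(a < t) p (sigma a)) * \prod_i (us s i + vs s i * cnt R sigma i)))); last first.
      by rewrite big_distrr; apply: eq_bigr => s _ /=; rewrite !big_distrr.
    rewrite exchange_big /=; apply: eq_bigr => sigma _.
    set X := \sum_(s : 'S_n) _.
    set Pp0 := \prod_(j < t) p (sigma j).
    transitivity (c / E ^+ t * X * Pp0).
      rewrite /c invfM; ring.
    rewrite -mulrA /X big_distrl big_distrr /=; apply: eq_bigr => s _.
    have -> : \prod_(i < n) (\matrix_(i0, j) ((i0 == j)%:R + cnt R sigma i0 * (alpha / r * L i0 j / l i0))) i (s i)
       = \prod_(i < n) (us s i + vs s i * cnt R sigma i).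
      by apply: eq_bigr => i _; rewrite mxE mulrC.
    set sg := (-1) ^+ _; set Q := \prod_i _; ring.
  rewrite inner.
  under eq_bigr => s _ do rewrite Gs_Phi -/S Phi_size.
  rewrite !big_distrr /=; apply: eq_bigr => s _.
  rewrite !big_distrr /=; apply: eq_bigr => k _.
  rewrite /g /x expr_div_n.
  set sg := (-1) ^+ _; set Q := (P s)`_k; rewrite /P -/Q; ring.
have ES : series F = fun N => \sum_s \sum_k series (g s k) N.
  rewrite EF; apply: funext => N; rewrite /series /= exchange_big; apply: eq_bigr => s _.
  exact: exchange_big.
suff H : expR (st + r * dt - r * E * dt) * \det (1%:M + alpha *: L) / dh =
   \sum_s \sum_(k < size (P s)) (c * (-1) ^+ s * (P s)`_k * expR (- lam)) * (x ^+ k * expR (x * S)).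
  rewrite H ES; apply: cvg_sum_seq => s; apply: cvg_sum_seq => k.
  have -> : series (g s k) = fun N => (c * (-1) ^+ s * (P s)`_k * expR (- lam)) *
       series (fun t => x ^+ t / (t`!)%:R * (t ^_ k)%:R * S ^+ (t - k)) N.
    by apply: funext => N; rewrite /series /= big_distrr.
  apply: cvgMr; exact: series_shift_cvg.
have E0 : E != 0 by rewrite /E gt_eqF // expR_gt0.
have hx : x = r * dt by rewrite /x Elam mulrAC mulfK.
have hP : forall s, (P s).[x] = \prod_i (1%:M + alpha *: L) i (s i).
  move=> s; rewrite /P /Pp horner_prod; apply: eq_bigr => i _.
  rewrite hornerD hornerC hornerZ hornerX !mxE /us /vs /p hx.
  have li0 : l i != 0 by rewrite gt_eqF.
  have dt0 : dt != 0 by rewrite gt_eqF // (hdt i).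
  by field; rewrite li0 dt0 r0.
have hxS : x * S = r * dt.
  rewrite hx /S /p -big_distrl /= -Edt.
  have [->|dt0] := eqVneq dt 0; first by rewrite !(mulr0, mul0r).
  by rewrite mulfV // mulr1.
transitivity (c * expR (- lam) * expR (x * S) * \sum_(s : 'S_n) (-1) ^+ s * (P s).[x]); last first.
  rewrite big_distrr; apply: eq_bigr => s _ /=; rewrite horner_coef !big_distrr; apply: eq_bigr => k _ /=.
  set sg := (-1) ^+ _; set pk := (P s)`_k; ring.
rewrite (eq_bigr _ (fun s _ => congr1 _ (hP s))) -leib hxS /c.
have -> : st + r * dt - r * E * dt = st + (- lam) + r * dt by rewrite Elam /E; ring.
rewrite !expRD; ring.
Qed.

End M.

Theorem mainTheorem7 (R : realType) (n m : nat) (L : 'M[R]_n)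
    (D : 'I_m -> 'I_n) (w : 'I_m -> R) (alpha r : R) :
  psd L ->
  (forall k, 0 < w k) ->
  0 < alpha ->
  1 <= r ->
  (forall i, 0 < lmarg L D w alpha i) ->
  let l := lmarg L D w alpha in
  let dt := \sum_(i < n) l i in
  let Lh := Lhat L D w in
  let st := deff (alpha *: Lh) in
  let lam := r * expR r^-1 * dt in
  series (poisson_iid_term lam (fun i => l i / dt)
    (fun t sigma =>
       expR st * \det (1%:M + alpha *: Ltilde L l r sigma)
       / (expR (t%:R / r) * \det (1%:M + alpha *: Lh)))) @ \oo -->
  expR (st + r * dt - r * expR r^-1 * dt)
    * \det (1%:M + alpha *: L) / \det (1%:M + alpha *: Lh).
Proof. exact: main_aux. Qed.
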